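(* Let $X$ be a compact metric space with metric $d$, let $f\colon X\to X$ be a continuous map with the s-limit shadowing property, let $C\in\mathcal{C}(f)$ and $D\in\mathcal{D}(C)$. Let $\mathcal{F},\mathcal{G}$ be full Furstenberg families which are compatible with $(X^n,f^{\times n})$ for all $n\ge2$, and suppose $\mathcal{F}$ is translation invariant. Let $n\ge2$ and $\delta>0$. If there is a $\delta$-distal $n$-tuple $(a_1,\dots,a_n)\in D^n$ for $f$, then for every $E\in\mathcal{D}(C)$ and every $0<r<\delta$, $V^s(E)$ is generic $(\mathcal{F},\mathcal{G})$-$n$-$r$-chaotic for $f$.
   Context: A $\delta$-chain of $f$ ($\delta>0$) is a finite sequence $(x_i)_{i=0}^k$, $k\ge1$, with $d(f(x_i),x_{i+1})\le\delta$ for $0\le i\le k-1$; it is a $\delta$-cycle if $x_0=x_k$, with length $k$. Write $x\to y$ if for every $\delta>0$ there is a $\delta$-chain from $x$ to $y$. Let $CR(f)=\{x\colon x\to x\}$; on $CR(f)$ let $x\leftrightarrow y$ iff $x\to y$ and $y\to x$; its classes are the chain components, forming $\mathcal{C}(f)$. For $C\in\mathcal{C}(f)$, $\delta>0$, let $m=m(C,\delta)$ be the gcd of the lengths of all $\delta$-cycles of $f|_C$, and for $x,y\in C$ let $x\sim_{C,\delta}y$ iff there is a $\delta$-chain of $f|_C$ from $x$ to $y$ of length divisible by $m$; $\mathcal{D}(C,\delta)$ is the set of its equivalence classes. Let $x\sim_C y$ iff $x\sim_{C,\delta}y$ for all $\delta>0$; $\mathcal{D}(C)$ is its set of classes. For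 $D\in\mathcal{D}(C)$, $D_\delta$ is the element of $\mathcal{D}(C,\delta)$ containing $D$. $W^s(C)=\{x\colon\lim_i d(f^i(x),C)=0\}$ and $V^s(D)=\bigcap_{\delta>0}\{x\in W^s(C)\colon\lim_i d(f^i(x),f^i(D_\delta))=0\}$. $f$ has the s-limit shadowing property if for every $\epsilon>0$ there is $\delta>0$ such that for every sequence $(x_i)_{i\ge0}$ with $d(f(x_i),x_{i+1})\le\delta$ for all $i$ and $d(f(x_i),x_{i+1})\to0$ there is $x\in X$ with $d(f^i(x),x_i)\le\epsilon$ for all $i$ and $d(f^i(x),x_i)\to0$. A Furstenberg family is a nonempty proper family $\mathcal{F}\subsetneq 2^{\mathbb{N}_0}$ closed under taking supersets; it is full if $\{i\in A\colon i\ge n\}\in\mathcal{F}$ for all $A\in\mathcal{F}$, $n\ge0$; translation invariant if $\{i+n\colon i\in A\}\in\mathcal{F}$ and $\{i\in\mathbb{N}_0\colon i+n\in A\}\in\mathcal{F}$ for all $A\in\mathcal{F}$, $n\ge0$. $f^{\times n}$ is the $n$-fold product map on $X^n$. $\mathcal{F}$ is compatible with $(X^n,f^{\times n})$ if for every open $U\subset X^n$ the set $\{z\in X^n\colon\{i\in\mathbb{N}_0\colon (f^{\times n})^i(z)\in U\}\in\mathcal{F}\}$ is a $G_\delta$-subset of $X^n$. $(x_1,\dots,x_n)$ is a $\delta$-distal $n$-tuple for $f$ if $\inf_{i\ge0}\min_{1\le j<k\le n}d(f^i(x_j),f^i(x_k))>\delta$. For $x_1,\dots,x_n\in X$, $r>0$: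 $S_f(x_1,\dots,x_n;r)=\{i\in\mathbb{N}_0\colon\min_{j<k}d(f^i(x_j),f^i(x_k))>r\}$ and $T_f(x_1,\dots,x_n;r)=\{i\in\mathbb{N}_0\colon\max_{j<k}d(f^i(x_j),f^i(x_k))<r\}$. $(x_1,\dots,x_n)$ is $(\mathcal{F},\mathcal{G})$-$r$-scrambled if $S_f(x_1,\dots,x_n;r)\in\mathcal{F}$ and $T_f(x_1,\dots,x_n;\epsilon)\in\mathcal{G}$ for all $\epsilon>0$. A nonempty $Y\subset X$ is generic $(\mathcal{F},\mathcal{G})$-$n$-$r$-chaotic for $f$ if the set of $(\mathcal{F},\mathcal{G})$-$r$-scrambled $n$-tuples in $Y^n$ is residual in $Y^n$ (contains a countable intersection of dense open subsets of $Y^n$). *)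

(* Defs.v *)
From mathcomp Require Import all_boot.
From Stdlib Require Import Reals.
Export Reals.

Set Implicit Arguments.
Unset Strict Implicit.
Unset Printing Implicit Defensive.

Section Dyn.
Variables (X : Type) (d : X -> X -> R) (f : X -> X).

Definition is_metric : Prop :=
  (forall x y, (0 <= d x y)%R) /\
  (forall x y, d x y = 0%R <-> x = y) /\
  (forall x y, d x y = d y x) /\
  (forall x y z, (d x z <= d x y + d y z)%R).

Definition mopen (U : X -> Prop) : Prop :=
  forall x, U x -> exists e, (0 < e)%R /\ forall y, (d x y < e)%R -> U y.

Definition mcompact : Prop :=
  forall (I : Type) (U : I -> X -> Prop),
    (forall i, mopen (U i)) -> (forall x, exists i, U i x) ->
    exists l : list I, forall x, exists i, List.In i l /\ U i x.

Definition mcontinuous : Prop :=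
  forall x e, (0 < e)%R -> exists h, (0 < h)%R /\
    forall y, (d x y < h)%R -> (d (f x) (f y) < e)%R.

Definition s_limit_shadowing : Prop :=
  forall eps, (0 < eps)%R -> exists del, (0 < del)%R /\
    forall xs : nat -> X,
      (forall i, (d (f (xs i)) (xs i.+1) <= del)%R) ->
      (forall e, (0 < e)%R -> exists N, forall i, (N <= i)%N ->
                 (d (f (xs i)) (xs i.+1) < e)%R) ->
      exists x, (forall i, (d (iter i f x) (xs i) <= eps)%R) /\
        (forall e, (0 < e)%R -> exists N, forall i, (N <= i)%N ->
                 (d (iter i f x) (xs i) < e)%R).

(* [chain P del x y k]: there is a del-chain (x_i)_{i=0}^k of f, k >= 1,
   from x to y all of whose points satisfy P (P = True: chains of f;
   P = C: chains of f|_C). *)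
Definition chain (P : X -> Prop) (del : R) (x y : X) (k : nat) : Prop :=
  exists xs : nat -> X, (1 <= k)%N /\ xs 0%N = x /\ xs k = y /\
    (forall i, (i <= k)%N -> P (xs i)) /\
    (forall i, (i < k)%N -> (d (f (xs i)) (xs i.+1) <= del)%R).

Definition chain_to (x y : X) : Prop :=
  forall del, (0 < del)%R -> exists k, chain (fun _ => True) del x y k.

Definition CR (x : X) : Prop := chain_to x x.

Definition chain_component (C : X -> Prop) : Prop :=
  exists x, CR x /\
    forall y, C y <-> (CR y /\ chain_to x y /\ chain_to y x).

Definition is_gcd_set (P : nat -> Prop) (m : nat) : Prop :=
  (forall k, P k -> (m %| k)%N) /\
  (forall g, (forall k, P k -> (g %| k)%N) -> (g %| m)%N).

Definition cycle_length (C : X -> Prop) (del : R) (k : nat) : Prop :=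
  exists x, C x /\ chain C del x x k.

Definition period (C : X -> Prop) (del : R) (m : nat) : Prop :=
  is_gcd_set (cycle_length C del) m.

Definition simCd (C : X -> Prop) (del : R) (x y : X) : Prop :=
  C x /\ C y /\ exists m, period C del m /\
    exists k, (m %| k)%N /\ chain C del x y k.

Definition simC (C : X -> Prop) (x y : X) : Prop :=
  forall del, (0 < del)%R -> simCd C del x y.

Definition Dclass (C D : X -> Prop) : Prop :=
  exists x, C x /\ forall y, D y <-> (C y /\ simC C x y).

Definition Ddelta (C D : X -> Prop) (del : R) (y : X) : Prop :=
  exists x, D x /\ simCd C del x y.

Definition Ws (C : X -> Prop) (x : X) : Prop :=
  forall e, (0 < e)%R -> exists N, forall i, (N <= i)%N ->
    exists c, C c /\ (d (iter i f x) c < e)%R.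

Definition Vs (C D : X -> Prop) (x : X) : Prop :=
  forall del, (0 < del)%R ->
    Ws C x /\
    forall e, (0 < e)%R -> exists N, forall i, (N <= i)%N ->
      exists c, Ddelta C D del c /\ (d (iter i f x) (iter i f c) < e)%R.

Definition open_n (n : nat) (U : ('I_n -> X) -> Prop) : Prop :=
  forall z, U z -> exists e, (0 < e)%R /\
    forall w, (forall j, (d (z j) (w j) < e)%R) -> U w.

Definition Gdelta_n (n : nat) (S : ('I_n -> X) -> Prop) : Prop :=
  exists V : nat -> ('I_n -> X) -> Prop,
    (forall k, open_n (V k)) /\ forall z, S z <-> (forall k, V k z).

Definition furstenberg (F : (nat -> Prop) -> Prop) : Prop :=
  (exists A, F A) /\ (exists A, ~ F A) /\
  (forall A B : nat -> Prop, F A -> (forall i, A i -> B i) -> F B).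

Definition full_family (F : (nat -> Prop) -> Prop) : Prop :=
  forall A n, F A -> F (fun i => A i /\ (n <= i)%N).

Definition translation_invariant (F : (nat -> Prop) -> Prop) : Prop :=
  forall A n, F A ->
    F (fun j => exists i, A i /\ j = (i + n)%N) /\ F (fun i => A (i + n)%N).

Definition compatible (F : (nat -> Prop) -> Prop) (n : nat) : Prop :=
  forall U : ('I_n -> X) -> Prop, open_n U ->
    Gdelta_n (fun z => F (fun i => U (fun j => iter i f (z j)))).

(* inf_i min_{j<k} d(f^i x_j, f^i x_k) > del *)
Definition distal_tuple (n : nat) (del : R) (a : 'I_n -> X) : Prop :=
  exists eta, (del < eta)%R /\
    forall i (j k : 'I_n), (j < k)%N ->
      (eta <= d (iter i f (a j)) (iter i f (a k)))%R.

Definition S_set (n : nat) (z : 'I_n -> X) (r : R) (i : nat) : Prop :=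
  forall j k : 'I_n, (j < k)%N -> (r < d (iter i f (z j)) (iter i f (z k)))%R.

Definition T_set (n : nat) (z : 'I_n -> X) (r : R) (i : nat) : Prop :=
  forall j k : 'I_n, (j < k)%N -> (d (iter i f (z j)) (iter i f (z k)) < r)%R.

Definition scrambled (F G : (nat -> Prop) -> Prop) (n : nat) (r : R)
    (z : 'I_n -> X) : Prop :=
  F (S_set z r) /\ forall e, (0 < e)%R -> G (T_set z e).

Definition in_pow (n : nat) (Y : X -> Prop) (z : 'I_n -> X) : Prop :=
  forall j, Y (z j).

Definition rel_open (n : nat) (Y : X -> Prop) (U : ('I_n -> X) -> Prop) : Prop :=
  (forall z, U z -> in_pow Y z) /\
  forall z, U z -> exists e, (0 < e)%R /\
    forall w, in_pow Y w -> (forall j, (d (z j) (w j) < e)%R) -> U w.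

Definition dense_in (n : nat) (Y : X -> Prop) (U : ('I_n -> X) -> Prop) : Prop :=
  forall z, in_pow Y z -> forall e, (0 < e)%R ->
    exists w, U w /\ forall j, (d (z j) (w j) < e)%R.

Definition residual (n : nat) (Y : X -> Prop) (P : ('I_n -> X) -> Prop) : Prop :=
  exists V : nat -> ('I_n -> X) -> Prop,
    (forall k, rel_open Y (V k) /\ dense_in Y (V k)) /\
    forall z, (forall k, V k z) -> P z.

Definition generic_chaotic (F G : (nat -> Prop) -> Prop) (n : nat) (r : R)
    (Y : X -> Prop) : Prop :=
  (exists y, Y y) /\
  residual Y (fun z : 'I_n -> X => in_pow Y z /\ scrambled F G r z).

End Dyn.

(* Main.v *)
Require Import Defs.
From mathcomp Require Import all_boot.
From Stdlib Require Import Reals.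
From mathcomp Require Import zify.
From Stdlib Require Import Lra Lia Classical ClassicalEpsilon.
Set Warnings "-notation-overridden".

Set Implicit Arguments.
Unset Strict Implicit.
Unset Printing Implicit Defensive.

Lemma fchoice {A B : Type} (P : A -> B -> Prop) :
  (forall a, exists b, P a b) -> exists g : A -> B, forall a, P a (g a).
Proof.
move=> H. exists (fun a => proj1_sig (constructive_indefinite_description _ (H a))).
move=> a. exact: (proj2_sig (constructive_indefinite_description _ (H a))).
Qed.

Lemma small_inv (e : R) : (0 < e)%R -> exists N, forall k, (N <= k)%N -> (/ INR k.+1 < e)%R.
Proof.
move=> He. have [N [HN HN0]] := archimed_cor1 _ He.
exists N => k Hk. apply: Rle_lt_trans HN.
apply: Rinv_le_contravar. apply: lt_0_INR. exact: HN0.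
apply: le_INR. apply/leP. lia.
Qed.

Lemma inv_pos k : (0 < / INR k.+1)%R.
Proof. apply: Rinv_0_lt_compat. apply: lt_0_INR. lia. Qed.

Lemma min_exists (P : nat -> Prop) : (exists n, P n) -> exists n, P n /\ forall m, P m -> (n <= m)%N.
Proof.
move=> [n Hn].
suff: forall N n, (n <= N)%N -> P n -> exists n, P n /\ forall m, P m -> (n <= m)%N by move/(_ n n (leqnn n) Hn).
elim=> [|N IH] k Hle Hk.
- exists 0. split; last done. by move: Hle Hk; case: k.
- case: (classic (exists m, P m /\ (m < k)%N)) => [[m [Hm Hlt]]|Hno].
  + apply: (IH m) => //. move: Hle Hlt. clear. lia.
  + exists k. split=> // m Hm. case: (leqP k m) => // Hlt. exfalso. apply: Hno. by exists m.
Qed.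

Section Basic.
Variables (X : Type) (d : X -> X -> R) (f : X -> X).
Hypothesis Hmet : is_metric d.
Hypothesis Hcpt : mcompact d.
Hypothesis Hcont : mcontinuous d f.

Lemma d_nonneg x y : (0 <= d x y)%R.
Proof. by case: Hmet. Qed.
Lemma d_refl x : d x x = 0%R.
Proof. case: Hmet => _ [H _]. by apply/H. Qed.
Lemma d_sym x y : d x y = d y x.
Proof. by case: Hmet => _ [_ [H _]]. Qed.
Lemma d_tri x y z : (d x z <= d x y + d y z)%R.
Proof. by case: Hmet => _ [_ [_ H]]. Qed.

Definition conv (u : nat -> X) (p : X) :=
  forall e, (0 < e)%R -> exists N, forall k, (N <= k)%N -> (d (u k) p < e)%R.

Lemma cluster (u : nat -> X) :
  exists p, forall e, (0 < e)%R -> forall N, exists i, (N <= i)%N /\ (d (u i) p < e)%R.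
Proof.
apply: NNPP => Hno.
have Hp : forall p, exists e N, (0 < e)%R /\ forall i, (N <= i)%N -> (e <= d (u i) p)%R.
  move=> p. apply: NNPP => H. apply: Hno. exists p => e He N.
  apply: NNPP => H2. apply: H. exists e, N. split=> // i Hi.
  apply: Rnot_lt_le => H3. apply: H2. by exists i.
pose I := {t : X * R * nat | (0 < t.1.2)%R /\ forall i, (t.2 <= i)%N -> (t.1.2 <= d (u i) t.1.1)%R}.
pose U := fun (t : I) (y : X) => (d (sval t).1.1 y < (sval t).1.2)%R.
have H1 : forall i, mopen d (U i).
  move=> [[[p e] N] [He HN]] y Hy; rewrite /U /= in Hy. exists (e - d p y)%R. split; first lra.
  move=> z Hz. rewrite /U /=. have := d_tri p y z. lra.
have H2 : forall x, exists i, U i x.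
  move=> x. have [e [N [He HN]]] := Hp x.
  exists (exist _ (x, e, N) (conj He HN)). rewrite /U /= d_refl. lra.
have [l Hl] := Hcpt H1 H2.
pose Nmax := foldr (fun t m => maxn (sval t).2 m) 0 l.
have [t [Ht Hu]] := Hl (u Nmax).
have Hle : ((sval t).2 <= Nmax)%N.
  rewrite /Nmax. clear Hu Nmax Hl. elim: l Ht => [|t' l IH] //= [->|Hin]; first by apply: leq_maxl.
  apply: leq_trans (IH Hin) _. exact: leq_maxr.
move: Hu Hle. case: t {Ht} => [[[p e] N] [He HN]] /= Hu Hle.
move: (HN Nmax Hle) => /= H. rewrite /U /= in Hu. rewrite d_sym in H. lra.
Qed.

Lemma unif_cont e : (0 < e)%R ->
  exists h, (0 < h)%R /\ forall x y, (d x y < h)%R -> (d (f x) (f y) < e)%R.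
Proof.
move=> He. apply: NNPP => Hno.
have H1 : forall k : nat, exists xy : X * X, (d xy.1 xy.2 < / INR k.+1)%R /\ (e <= d (f xy.1) (f xy.2))%R.
  move=> k. apply: NNPP => H. apply: Hno. exists (/ INR k.+1)%R. split; first exact: inv_pos.
  move=> x y Hxy. apply: Rnot_le_lt => H2. apply: H. by exists (x, y).
have [g Hg] := fchoice H1.
have [q Hq] := cluster (fun k => (g k).1).
have He2 : (0 < e/2)%R by lra.
have [h [Hh Hch]] := Hcont q He2.
have Hh2 : (0 < h/2)%R by lra.
have [N HN] := small_inv Hh2.
have [i [Hi Hdi]] := Hq _ Hh2 N.
have [Hg1 Hg2] := Hg i.
have HiN := HN i Hi.
have Hd1 : (d q (g i).1 < h)%R by rewrite d_sym; lra.
have Hd2 : (d q (g i).2 < h)%R.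
  have := d_tri q (g i).1 (g i).2. rewrite d_sym in Hdi. move=> ?. lra.
have := Hch _ Hd1. have := Hch _ Hd2. have := d_tri (f (g i).1) (f q) (f (g i).2).
rewrite (d_sym (f (g i).1) (f q)). move=> ? ? ?. lra.
Qed.

Lemma iter_cont k x e : (0 < e)%R ->
  exists h, (0 < h)%R /\ forall y, (d x y < h)%R -> (d (iter k f x) (iter k f y) < e)%R.
Proof.
elim: k e => [|k IH] e He.
- exists e. by split.
- have [h1 [Hh1 H1]] := Hcont (iter k f x) He.
  have [h [Hh H]] := IH _ Hh1. exists h. split=> // y Hy.
  rewrite !iterS. apply: H1. exact: H.
Qed.

Lemma subseq (u : nat -> X) : exists phi : nat -> nat, (forall k, (phi k < phi k.+1)%N) /\ exists p, conv (fun k => u (phi k)) p.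
Proof.
have [p Hp] := cluster u.
have H1 : forall mk : nat * nat, exists i, (mk.1 <= i)%N /\ (d (u i) p < / INR mk.2.+1)%R.
  move=> [m k]. exact: Hp _ (inv_pos k) m.
have [g Hg] := fchoice H1.
pose phi := fix phi k := match k with 0 => g (0, 0) | k'.+1 => g ((phi k').+1, k'.+1) end.
exists phi. split.
- move=> k. by case: (Hg ((phi k).+1, k.+1)).
- exists p => e He. have [N HN] := small_inv He. exists N => k Hk.
  apply: Rlt_trans (HN k Hk). case: k {Hk} => [|k].
  + by case: (Hg (0, 0)).
  + by case: (Hg ((phi k).+1, k.+1)).
Qed.

Lemma incr_ge (phi : nat -> nat) : (forall k, (phi k < phi k.+1)%N) -> forall k, (k <= phi k)%N.
Proof. move=> H. elim=> [|k IH] //. apply: leq_ltn_trans IH (H k). Qed.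

Lemma incr_mono (phi : nat -> nat) : (forall k, (phi k < phi k.+1)%N) -> forall k l, (k <= l)%N -> (phi k <= phi l)%N.
Proof.
move=> H k l Hkl. elim: l Hkl => [|l IH] Hkl.
- by have -> : k = 0 by lia.
- case: (ltnP k l.+1) => Hk.
  + apply: leq_trans (IH _) (ltnW (H l)). lia.
  + have -> : k = l.+1 by lia. done.
Qed.

Lemma conv_sub (u : nat -> X) p (psi : nat -> nat) : (forall k, (psi k < psi k.+1)%N) ->
  conv u p -> conv (fun k => u (psi k)) p.
Proof.
move=> Hpsi Hu e He. have [N HN] := Hu e He. exists N => k Hk. apply: HN.
apply: leq_trans Hk (incr_ge Hpsi k).
Qed.


Definition ch (P : X -> Prop) (del : R) (xs : nat -> X) (k : nat) :=
  (forall i, (i <= k)%N -> P (xs i)) /\ (forall i, (i < k)%N -> (d (f (xs i)) (xs i.+1) <= del)%R).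

Lemma chain_mono (P Q : X -> Prop) del del' x y k : (del <= del')%R -> (forall z, P z -> Q z) ->
  chain d f P del x y k -> chain d f Q del' x y k.
Proof.
move=> Hd HPQ [xs [Hk [H0 [Hk' [HP Hj]]]]]. exists xs. do 3 (split=> //). split.
- move=> i Hi. exact: HPQ (HP i Hi).
- move=> i Hi. apply: Rle_trans (Hj i Hi) Hd.
Qed.

Lemma chain_cat P del x y z k l : chain d f P del x y k -> chain d f P del y z l -> chain d f P del x z (k + l).
Proof.
move=> [xs [Hk [H0 [Hk' [HP Hj]]]]] [ys [Hl [H0' [Hl' [HP' Hj']]]]].
exists (fun i => if (i <= k)%N then xs i else ys (i - k)). split; first lia. split; first by rewrite leq0n.
split.
  have -> : (k + l <= k)%N = false by lia. by have -> : (k + l - k = l)%N by lia.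
split.
- move=> i Hi. case: ifP => Hik; first exact: HP. apply: HP'. lia.
- move=> i Hi. cbv beta. case: (ltnP i k) => Hik.
  + rewrite (ltnW Hik). exact: Hj.
  + case: (leqP i k) => Hik2.
    * have Hie : i = k by lia. subst i. rewrite Hk' -H0'. have -> : (k.+1 - k = 1)%N by lia.
      exact: Hj'.
    * have -> : (i.+1 - k = (i - k).+1)%N by lia.
      apply: Hj'. lia.
Qed.

Lemma chain_one (P : X -> Prop) del x y : P x -> P y -> (d (f x) y <= del)%R -> chain d f P del x y 1.
Proof.
move=> Hx Hy Hd. exists (fun i => if i == 0 then x else y). split=> //. split=> //. split=> //.
split.
- by move=> [|i] _.
- by move=> [|i] Hi.
Qed.

Lemma chain_orbit (P : X -> Prop) del x s : (forall z, P z -> P (f z)) -> P x -> (0 <= del)%R -> (1 <= s)%N ->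
  chain d f P del x (iter s f x) s.
Proof.
move=> Hinv Hx Hd Hs. exists (fun i => iter i f x). do 3 (split=> //). split.
- move=> i _. elim: i => [|i IH] //=. exact: Hinv.
- move=> i _. rewrite iterS d_refl. exact: Hd.
Qed.

Lemma chain_ext (P : X -> Prop) del x y k : (forall z, P z -> P (f z)) -> (0 <= del)%R ->
  chain d f P del x y k -> forall s, chain d f P del x (iter s f y) (k + s).
Proof.
move=> Hinv Hd Hc [|s]; first by rewrite addn0.
have Hy : P y by case: Hc => xs [Hk [H0 [<- [HP _]]]]; apply: HP.
apply: chain_cat Hc _. exact: chain_orbit.
Qed.

Lemma chain_last (P : X -> Prop) del x y y' k : P y' -> chain d f P del x y k -> chain d f P (del + d y y') x y' k.
Proof.
move=> Hy' [xs [Hk [H0 [Hk' [HP Hj]]]]]. exists (fun i => if i == k then y' else xs i).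
split=> //. split; first by have -> : (0 == k) = false by lia. split; first by rewrite eqxx.
split.
- move=> i Hi. case: eqP => // _. exact: HP.
- move=> i Hi. have -> : (i == k) = false by lia. case: eqP => Hik.
  + rewrite -Hk' -Hik. have := Hj i Hi. have := d_tri (f (xs i)) (xs i.+1) y'. rewrite Hik Hk'. move=> ? ?. lra.
  + have := Hj i Hi. have := d_nonneg y y'. move=> ? ?. lra.
Qed.

Lemma chain_first (P : X -> Prop) del x x' y k : P x' -> chain d f P del x y k -> chain d f P (del + d (f x') (f x)) x' y k.
Proof.
move=> Hx' [xs [Hk [H0 [Hk' [HP Hj]]]]]. exists (fun i => if i == 0 then x' else xs i).
split=> //. split=> //. split; first by have -> : (k == 0) = false by lia.
split.
- move=> i Hi. case: eqP => // _. exact: HP.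
- move=> i Hi /=. case: eqP => Hi0.
  + subst i. have := Hj 0 Hi. rewrite H0. have := d_tri (f x') (f x) (xs 1). move=> ? ?. lra.
  + have := Hj i Hi. have := d_nonneg (f x') (f x). move=> ? ?. lra.
Qed.

Lemma chain_pow (P : X -> Prop) del u k : chain d f P del u u k -> forall t, (1 <= t)%N -> chain d f P del u u (t * k).
Proof.
move=> Hc. elim=> [|t IH] // _. case: t IH => [|t] IH; first by rewrite mul1n.
rewrite mulSn. apply: chain_cat Hc (IH _) => //.
Qed.

Lemma chain_prefix (P : X -> Prop) del xs K i : ch P del xs K -> (1 <= i)%N -> (i <= K)%N -> chain d f P del (xs 0) (xs i) i.
Proof.
move=> [HP Hj] Hi HiK. exists xs. do 3 (split=> //). split.
- move=> j Hj'. apply: HP. lia.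
- move=> j Hj'. apply: Hj. lia.
Qed.

Lemma chain_suffix (P : X -> Prop) del xs K i : ch P del xs K -> (i < K)%N -> chain d f P del (xs i) (xs K) (K - i).
Proof.
move=> [HP Hj] Hi. exists (fun j => xs (i + j)). split; first lia. rewrite addn0. split=> //.
split; first by have -> : (i + (K - i) = K)%N by lia.
split.
- move=> j Hj'. apply: HP. lia.
- move=> j Hj'. rewrite addnS. apply: Hj. lia.
Qed.

Lemma chain_tail (P : X -> Prop) del x y k : chain d f P del x y k -> (2 <= k)%N ->
  exists s, P s /\ (d (f x) s <= del)%R /\ chain d f P del s y k.-1.
Proof.
move=> [xs [Hk [H0 [Hk' [HP Hj]]]]] H2. exists (xs 1). split; first by apply: HP; lia.
split; first by rewrite -H0; apply: Hj; lia.
have := chain_suffix (conj HP Hj) (i := 1) ltac:(lia). rewrite Hk'. by have -> : (k - 1 = k.-1)%N by lia.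
Qed.

Lemma chain_to_trans x y z : chain_to d f x y -> chain_to d f y z -> chain_to d f x z.
Proof.
move=> H1 H2 del Hd. have [k Hk] := H1 del Hd. have [l Hl] := H2 del Hd. exists (k + l).
exact: chain_cat Hk Hl.
Qed.

Lemma chain_to_f y z : CR d f y -> chain_to d f y z -> chain_to d f (f y) z.
Proof.
move=> Hy Hyz del Hd.
have Hd2 : (0 < del / 2)%R by lra.
have [h [Hh Hch]] := Hcont (f y) Hd2.
pose del' := Rmin (del/2) (h/2).
have Hdel' : (0 < del')%R by apply: Rmin_pos; lra.
have [k Hk] := Hy del' Hdel'. have [l Hl] := Hyz del' Hdel'.
have Hc := chain_cat Hk Hl.
have Hkl : (2 <= k + l)%N by case: Hk => [? [? _]]; case: Hl => [? [? _]]; lia.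
have [s [_ [Hs Hc']]] := chain_tail Hc Hkl.
exists (k + l).-1.
have Hc'' := chain_first (x' := f y) I Hc'.
apply: chain_mono Hc'' => //.
have : (d (f y) s < h)%R.
  apply: Rle_lt_trans Hs _. have := Rmin_r (del/2) (h/2). rewrite -/del'. lra.
move/Hch. have := Rmin_l (del/2) (h/2). rewrite -/del'. lra.
Qed.

Lemma chain_to_step y : chain_to d f y (f y).
Proof. move=> del Hd. exists 1. apply: chain_one => //. rewrite d_refl. lra. Qed.

Lemma to_near x p : (forall del, (0 < del)%R -> exists y k, chain d f (fun _ => True) del x y k /\ (d y p < del)%R) ->
  chain_to d f x p.
Proof.
move=> H del Hd. have Hd2 : (0 < del/2)%R by lra.
have [y [k [Hc Hy]]] := H _ Hd2. exists k. have := chain_last (y' := p) I Hc.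
apply: chain_mono => //. lra.
Qed.

Lemma from_near p x : (forall del h, (0 < del)%R -> (0 < h)%R -> exists y k, chain d f (fun _ => True) del y x k /\ (d p y < h)%R) ->
  chain_to d f p x.
Proof.
move=> H del Hd. have Hd2 : (0 < del/2)%R by lra.
have [h [Hh Hch]] := Hcont p Hd2.
have [y [k [Hc Hy]]] := H _ _ Hd2 Hh. exists k. have := chain_first (x' := p) I Hc.
apply: chain_mono => //. have := Hch _ Hy. lra.
Qed.

Variable C : X -> Prop.
Hypothesis HC : chain_component d f C.

Lemma C_CR x : C x -> CR d f x.
Proof. case: HC => x0 [_ H] /H. by case. Qed.

Lemma C_to x y : C x -> C y -> chain_to d f x y.
Proof.
case: HC => x0 [_ H] /H [_ [_ H1]] /H [_ [H2 _]]. exact: chain_to_trans H1 H2.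
Qed.

Lemma C_of x y : C x -> chain_to d f x y -> chain_to d f y x -> C y.
Proof.
move=> Hx Hxy Hyx. have Hx' := Hx. case: HC => x0 [_ H]. move/H: Hx' => [_ [H1 H2]].
apply/H. split; first exact: chain_to_trans Hyx Hxy.
split; [exact: chain_to_trans H1 Hxy | exact: chain_to_trans Hyx H2].
Qed.

Lemma C_inv y : C y -> C (f y).
Proof.
move=> Hy. apply: (C_of Hy (chain_to_step y)). apply: chain_to_f; first exact: (C_CR Hy).
exact: (C_CR Hy).
Qed.

Lemma C_iter k y : C y -> C (iter k f y).
Proof. move=> Hy. elim: k => [|k IH] //=. exact: C_inv. Qed.

Lemma C_closed x p : C x -> (forall e, (0 < e)%R -> exists y, C y /\ (d y p < e)%R) -> C p.
Proof.
move=> Hx H. apply: (C_of Hx).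
- apply: to_near => del Hd. have [y [Hy Hyp]] := H _ Hd.
  have [k Hk] := C_to Hx Hy Hd. by exists y, k.
- apply: from_near => del h Hd Hh. have [y [Hy Hyp]] := H _ Hh.
  have [k Hk] := C_to Hy Hx Hd. exists y, k. split=> //. by rewrite d_sym.
Qed.

Lemma ICT x y del : C x -> C y -> (0 < del)%R -> exists k, chain d f C del x y k.
Proof.
move=> Hx Hy Hd.
have Hd3 : (0 < del/3)%R by lra.
have [h [Hh Hu]] := unif_cont Hd3.
pose eta := Rmin h (del/3).
have Heta : (0 < eta)%R by apply: Rmin_pos.
have Heh : (eta <= h)%R by apply: Rmin_l.
have Hed : (eta <= del/3)%R by apply: Rmin_r.
pose epsk k := Rmin (del/3) (/ INR k.+1).
have Hepsk : forall k, (0 < epsk k)%R by move=> k; apply: Rmin_pos => //; exact: inv_pos.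
have Hepsk1 : forall k, (epsk k <= / INR k.+1)%R by move=> k; apply: Rmin_r.
have Hepsk2 : forall k, (epsk k <= del/3)%R by move=> k; apply: Rmin_l.
have Hclaim : exists k, forall xs K, xs 0 = x -> xs K = y -> ch (fun _ => True) (epsk k) xs K ->
    forall i, (i <= K)%N -> exists c, C c /\ (d (xs i) c < eta)%R.
  apply: NNPP => Hno.
  have H1 : forall k, exists t : (nat -> X) * nat * nat,
      t.1.1 0 = x /\ t.1.1 t.1.2 = y /\ ch (fun _ => True) (epsk k) t.1.1 t.1.2 /\ (t.2 <= t.1.2)%N /\
      forall c, C c -> (eta <= d (t.1.1 t.2) c)%R.
    move=> k. apply: NNPP => Hk. apply: Hno. exists k => xs K H0 HK Hch i Hi.
    apply: NNPP => Hc. apply: Hk. exists (xs, K, i) => /=. do 4 (split=> //).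
    move=> c HCc. apply: Rnot_lt_le => Hlt. apply: Hc. by exists c.
  have [g Hg] := fchoice H1.
  pose s k := (g k).1.1 (g k).2.
  have [q Hq] := cluster s.
  have HCq : C q.
    apply: (C_of Hx).
    - apply: to_near => del' Hd'. have [N HN] := small_inv Hd'.
      have [i [HiN Hdi]] := Hq _ Hd' N. exists (s i).
      have [H0 [HK [Hch [HiK Hfar]]]] := Hg i.
      case E: (g i).2 => [|j].
      + have [k Hk] := C_CR Hx Hd'. exists k. split=> //. by rewrite /s E H0.
      + exists j.+1. split=> //. rewrite /s E -{1}H0. apply: (chain_mono _ _ (chain_prefix Hch _ _)) => //.
        * apply: Rle_trans (Hepsk1 i) _. apply: Rlt_le. exact: HN.
        * by rewrite -E.
    - apply: from_near => del' h' Hd' Hh'. have [N HN] := small_inv Hd'.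
      have [i [HiN Hdi]] := Hq _ Hh' N. exists (s i).
      have [H0 [HK [Hch [HiK Hfar]]]] := Hg i.
      have Hyx := C_to Hy Hx Hd'. case: Hyx => l Hl.
      case: (ltnP (g i).2 (g i).1.2) => Hlt.
      + exists ((g i).1.2 - (g i).2 + l)%N. split; last by rewrite d_sym.
        apply: (chain_cat _ Hl). rewrite /s -HK. apply: (chain_mono _ _ (chain_suffix Hch Hlt)) => //.
        apply: Rle_trans (Hepsk1 i) _. apply: Rlt_le. exact: HN.
      + have E : (g i).2 = (g i).1.2 by lia.
        exists l. split; last by rewrite d_sym. by rewrite /s E HK.
  have [i [_ Hdi]] := Hq _ Heta 0.
  have [_ [_ [_ [_ Hfar]]]] := Hg i.
  have := Hfar _ HCq. rewrite -/(s i). lra.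
case: Hclaim => k Hk.
have [K [xs [HK1 [H0 [HK [HP Hj]]]]]] := C_to Hx Hy (Hepsk k).
have Hch : ch (fun _ => True) (epsk k) xs K by split.
have H2 : forall i, exists c, C c /\ ((i <= K)%N -> (d (xs i) c < eta)%R).
  move=> i. case: (leqP i K) => HiK.
  - have [c [Hc1 Hc2]] := Hk xs K H0 HK Hch i HiK. by exists c.
  - exists x. split; [done | move=> Hf; lia].
have [g Hg] := fchoice H2.
pose c' i := if i == 0 then x else if i == K then y else g i.
have Hc'C : forall i, C (c' i).
  move=> i. rewrite /c'. case: eqP => // _. case: eqP => // _. by case: (Hg i).
have Hc'd : forall i, (i <= K)%N -> (d (xs i) (c' i) < eta)%R.
  move=> i HiK. rewrite /c'. case: eqP => [->|_]; first by rewrite H0 d_refl.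
  case: eqP => [->|_]; first by rewrite HK d_refl. case: (Hg i) => _. by apply.
exists K. exists c'. split=> //. split; first by rewrite /c'. split.
  rewrite /c'. have -> : (K == 0) = false by lia. by rewrite eqxx.
split=> // i Hi.
have Hd1 : (d (c' i) (xs i) < h)%R.
  rewrite d_sym. have := Hc'd i (ltnW Hi). lra.
have := Hu _ _ Hd1. have := Hj i Hi. have := Hc'd i.+1 Hi. have := Hepsk2 k.
have := d_tri (f (c' i)) (f (xs i)) (c' i.+1). have := d_tri (f (xs i)) (xs i.+1) (c' i.+1).
move=> ? ? ? ? ? ?. lra.
Qed.

Lemma period_uniq del m m' : period d f C del m -> period d f C del m' -> m = m'.
Proof.
move=> [H1 H2] [H1' H2']. apply/eqP. rewrite eqn_dvd. by rewrite (H2' _ H1) (H2 _ H1').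
Qed.

Lemma period_mono del del' m m' : (del' <= del)%R -> period d f C del m -> period d f C del' m' -> (m %| m')%N.
Proof.
move=> Hdd [H1 H2] [H1' H2']. apply: H2' => k [y [Hy Hc]]. apply: H1. exists y. split=> //.
exact: chain_mono Hc.
Qed.

Lemma cyc_div del m u k : period d f C del m -> C u -> chain d f C del u u k -> (m %| k)%N.
Proof. move=> [H1 _] Hu Hc. apply: H1. by exists u. Qed.

Lemma per_exists u del : C u -> (0 < del)%R -> exists m, (0 < m)%N /\ period d f C del m /\
  exists t0, forall t, (t0 <= t)%N -> chain d f C del u u (t * m).
Proof.
move=> Hu Hd.
pose L0 t := t = 0 \/ chain d f C del u u t.
have L0_add : forall a b, L0 a -> L0 b -> L0 (a + b).
  move=> a b [->|Ha] [->|Hb]; rewrite ?addn0 ?add0n; [by left|by right|by right|].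
  right. exact: chain_cat Ha Hb.
have L0_mul : forall a s, L0 a -> L0 (s * a).
  move=> a s Ha. elim: s => [|s IH]; first by left. rewrite mulSn. exact: L0_add.
have [k0 Hk0] := ICT Hu Hu Hd.
have Hk01 : (1 <= k0)%N by case: Hk0 => ? [].
pose G g := (1 <= g)%N /\ exists Q, L0 Q /\ L0 (Q + g).
have [g [[Hg1 [Q [HQ HQg]]] Hmin]] : exists g, G g /\ forall m, G m -> (g <= m)%N.
  apply: min_exists. exists k0. split=> //. exists 0. split; first by left. by right.
have HA : forall l, L0 l -> (g %| l)%N.
  move=> l Hl. case: (posnP (l %% g)) => Hv; first by rewrite /dvdn Hv.
  have Hlt : (l %% g < g)%N by rewrite ltn_pmod.
  have : G (l %% g).
    split=> //. exists ((l %/ g) * (Q + g)). split; first exact: L0_mul.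
    have -> : ((l %/ g) * (Q + g) + l %% g = l + (l %/ g) * Q)%N.
      have := divn_eq l g. nia.
    apply: L0_add => //. exact: L0_mul.
  move/Hmin. lia.
have HB : forall k, cycle_length d f C del k -> (g %| k)%N.
  move=> k [y [Hy Hc]].
  have [a Ha] := ICT Hu Hy Hd. have [b Hb] := ICT Hy Hu Hd.
  have H1 : (g %| a + b)%N by apply: HA; right; exact: chain_cat Ha Hb.
  have H2 : (g %| a + b + k)%N.
    have -> : (a + b + k = (a + k) + b)%N by lia.
    apply: HA. right. apply: chain_cat _ Hb. exact: chain_cat Ha Hc.
  by rewrite -(dvdn_addr k H1).
exists g. split=> //. split.
  split=> // g' Hg'.
  have HQ' : (g' %| Q)%N by case: HQ => [->|HQ]; [exact: dvdn0 | apply: Hg'; exists u].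
  have HQg' : (g' %| Q + g)%N by case: HQg => [E|HQg]; [rewrite E; exact: dvdn0 | apply: Hg'; exists u].
  by rewrite -(dvdn_addr g HQ').
have HgQ := HA _ HQ.
pose q := (Q %/ g)%N.
have HQq : Q = (q * g)%N by rewrite /q divnK.
exists (q * q + 1)%N => t Ht.
have : L0 (t * g).
  case: (posnP q) => Hq.
  - have HQ0 : Q = 0 by rewrite HQq Hq.
    rewrite HQ0 add0n in HQg. exact: L0_mul.
  - have -> : (t * g = (t %/ q - t %% q) * Q + (t %% q) * (Q + g))%N.
      have E1 := divn_eq t q. have E2 : (t %% q < q)%N by rewrite ltn_pmod.
      have E3 : (q <= t %/ q)%N by rewrite leq_divRL //; lia.
      rewrite HQq. nia.
    apply: L0_add; exact: L0_mul.
case=> // H0. exfalso. have : (1 <= t * g)%N by rewrite muln_gt0; apply/andP; split; lia.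
by rewrite H0.
Qed.

Lemma chain_extend del z y T : chain d f (fun _ => True) del z y T -> (0 <= del)%R ->
  exists xs : nat -> X, xs 0 = z /\ (forall i, (d (f (xs i)) (xs i.+1) <= del)%R) /\
    forall i, (T <= i)%N -> xs i = iter (i - T) f y.
Proof.
move=> [ys [HT [H0 [HTy [_ Hj]]]]] Hd.
exists (fun i => if (i <= T)%N then ys i else iter (i - T) f y). split; first by rewrite leq0n.
have Htail : forall i, (T <= i)%N -> (if (i <= T)%N then ys i else iter (i - T) f y) = iter (i - T) f y.
  move=> i Hi. case: ifP => Hi2 //. have -> : i = T by lia. by rewrite subnn HTy.
split=> [i|]; last exact: Htail.
case: (ltnP i T) => Hi.
- rewrite (ltnW Hi). exact: Hj.
- rewrite (Htail _ Hi).
  have -> : (i.+1 - T = (i - T).+1)%N by lia. by rewrite iterS d_refl.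
Qed.

Definition asym (w b : X) := forall e, (0 < e)%R -> exists N, forall i, (N <= i)%N ->
  (d (iter i f w) (iter i f b) < e)%R.

Variable E : X -> Prop.
Hypothesis HE : Dclass d f C E.

Lemma E_C y : E y -> C y.
Proof. case: HE => xE [_ H] /H. by case. Qed.

Lemma E_self b del : E b -> (0 < del)%R -> simCd d f C del b b.
Proof.
move=> Hb Hd. have HCb := E_C Hb.
have [m [_ [Hper _]]] := per_exists HCb Hd. have [k Hk] := ICT HCb HCb Hd.
split=> //. split=> //. exists m. split=> //. exists k. split=> //. exact: cyc_div Hper HCb Hk.
Qed.

Lemma VsE w b : E b -> asym w b -> Vs d f C E w.
Proof.
move=> Hb Has del Hd. have HCb := E_C Hb. split.
- move=> e He. have [N HN] := Has e He. exists N => i Hi. exists (iter i f b). split; last exact: HN.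
  exact: C_iter.
- move=> e He. have [N HN] := Has e He. exists N => i Hi. exists b. split; last exact: HN.
  exists b. split=> //. exact: E_self.
Qed.

Hypothesis Hshadow : s_limit_shadowing d f.

Lemma CORE z b eps : Vs d f C E z -> E b -> (0 < eps)%R -> exists w, (d z w < eps)%R /\ asym w b.
Proof.
move=> Hz Hb Heps.
have [xE [HxE HEchar]] := HE.
have Heps2 : (0 < eps/2)%R by lra.
have [del [Hdel Hsh]] := Hshadow Heps2.
pose d1 := (del/2)%R.
have Hd1 : (0 < d1)%R by rewrite /d1; lra.
have [m [Hm [Hper [t0 Ht0]]]] := per_exists HxE Hd1.
have [_ Hz2] := Hz d1 Hd1.
have Hdel2 : (0 < del/2)%R by lra.
have [N0 HN0] := Hz2 _ Hdel2.
pose M := N0.+1.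
have [c [[e' [He' [HCe' [HCc [m0 [Hm0 [k0 [Hk0d Hk0]]]]]]]] Hzc]] := HN0 M (leqnSn N0).
have Em0 : m0 = m := period_uniq Hm0 Hper. subst m0.
have [_ HsimE'] := (HEchar e').1 He'.
have [_ [_ [m1 [Hm1 [ke [Hked Hke]]]]]] := HsimE' d1 Hd1.
have Em1 : m1 = m := period_uniq Hm1 Hper. subst m1.
have HCMc := C_iter M HCc.
have [l1 Hl1] := ICT HCMc HxE Hd1.
have Hd10 : (0 <= d1)%R by lra.
have Hdiv1 : (m %| M + l1)%N.
  have Hcyc := chain_cat (chain_ext C_inv Hd10 (chain_cat Hke Hk0) M) Hl1.
  have := cyc_div Hper HxE Hcyc.
  have -> : (ke + k0 + M + l1 = (ke + k0) + (M + l1))%N by lia.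
  by rewrite dvdn_addr // dvdn_add.
have [HCb HsimB] := (HEchar b).1 Hb.
have Hd2 : (0 < d1/2)%R by lra.
have [_ [_ [m2 [Hm2 [q [Hqd Hq]]]]]] := HsimB (d1/2)%R Hd2.
have Hmm2 : (m %| m2)%N by apply: (period_mono _ Hper Hm2); lra.
have Hmq : (m %| q)%N := dvdn_trans Hmm2 Hqd.
have Hq1 : (1 <= q)%N by case: Hq => ? [].
have [p Hp] := cluster (fun T => iter T f b).
have Hd4 : (0 < d1/4)%R by lra.
have [T1 [_ HT1]] := Hp _ Hd4 0.
pose K := (q + M + l1 + t0 * m)%N.
have [T2 [HT2 HT2p]] := Hp _ Hd4 (T1 + K).
have Hclose : (d (iter T1 f b) (iter T2 f b) < d1/2)%R.
  have := d_tri (iter T1 f b) p (iter T2 f b). rewrite (d_sym p). move=> /= ?.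
  rewrite /= in HT1 HT2p. lra.
have Hd20 : (0 <= d1/2)%R by lra.
have HA : chain d f C d1 xE (iter T2 f b) (q + T1).
  have := chain_last (C_iter T2 HCb) (chain_ext C_inv Hd20 Hq T1).
  apply: chain_mono => //. lra.
have HB : chain d f C d1 xE (iter T2 f b) (q + T2).
  have := chain_ext C_inv Hd20 Hq T2. apply: chain_mono => //. lra.
have [mu Hmu] := ICT (C_iter T2 HCb) HxE Hd1.
have HdA := cyc_div Hper HxE (chain_cat HA Hmu).
have HdB := cyc_div Hper HxE (chain_cat HB Hmu).
have HdT : (m %| T2 - T1)%N.
  have HT12 : (T1 <= T2)%N by move: HT2; clear; lia.
  move: HdB. have -> : (q + T2 + mu = (q + T1 + mu) + (T2 - T1))%N by move: HT12; clear; lia.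
  by rewrite dvdn_addr.
pose P := (T2 - T1 - q - (M + l1))%N.
have HmP : (m %| P)%N by rewrite /P; apply: dvdn_sub => //; apply: dvdn_sub.
have HPge : (t0 * m <= P)%N.
  rewrite /P. move: HT2. rewrite /K. clear. lia.
have Hpad : chain d f C d1 xE xE P.
  have -> : P = (P %/ m * m)%N by rewrite divnK.
  apply: Ht0. by rewrite leq_divRL.
have Hs1 : chain d f (fun _ => True) del z (iter M f c) M.
  have := chain_last (y' := iter M f c) I (chain_orbit (P := fun _ => True) (del := 0%R) (x := z) (fun _ _ => I) I (Rle_refl 0) (ltn0Sn N0)).
  apply: chain_mono => //. move: Hzc. rewrite /M. move=> ?. lra.
have HdD : (d1 <= del)%R by rewrite /d1; lra.
have HL : T2 = (M + (l1 + (P + (q + T1))))%N.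
  rewrite /P. move: HT2. rewrite /K. clear. lia.
have Hbig : chain d f (fun _ => True) del z (iter T2 f b) T2.
  rewrite {2}HL.
  apply: chain_cat Hs1 _. apply: chain_cat; first exact: (chain_mono HdD (fun _ _ => I) Hl1).
  apply: chain_cat; first exact: (chain_mono HdD (fun _ _ => I) Hpad). exact: (chain_mono HdD (fun _ _ => I) HA).
have [xs [Hxs0 [Hxsj Hxst]]] := chain_extend Hbig (Rlt_le _ _ Hdel).
have Hxstail : forall e, (0 < e)%R -> exists N, forall i, (N <= i)%N -> (d (f (xs i)) (xs i.+1) < e)%R.
  move=> e He. exists T2 => i Hi. rewrite Hxst // Hxst; last by move: Hi; clear; lia.
  have -> : (i.+1 - T2 = (i - T2).+1)%N by move: Hi; clear; lia. by rewrite iterS d_refl.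
have [w [Hw1 Hw2]] := Hsh xs Hxsj Hxstail.
exists w. split.
- have := Hw1 0. rewrite /= Hxs0 d_sym. lra.
- move=> e He. have [N HN] := Hw2 e He. exists (maxn N T2) => i Hi.
  have HiN : (N <= i)%N by move: Hi; clear; lia.
  have HiT : (T2 <= i)%N by move: Hi; clear; lia.
  have := HN i HiN. rewrite Hxst // -iterD subnK //.
Qed.

Lemma joint (I : eqType) (Z : nat -> I -> X) (l : seq I) :
  exists phi : nat -> nat, (forall k, (phi k < phi k.+1)%N) /\
    forall j, j \in l -> exists p, conv (fun k => Z (phi k) j) p.
Proof.
elim: l => [|j l [phi [Hphi IH]]].
- exists (fun k : nat => k). split; first by move=> k. move=> j. by rewrite in_nil.
- have [psi [Hpsi [p Hp]]] := subseq (fun k => Z (phi k) j).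
  exists (fun k => phi (psi k)). split.
  + move=> k. have H1 := Hpsi k. have := incr_mono Hphi H1. move: (Hphi (psi k)). clear. lia.
  + move=> j'. rewrite in_cons => /orP [/eqP ->|Hj']; first by exists p.
    have [p' Hp'] := IH j' Hj'. exists p'. exact: (conv_sub (u := fun k => Z (phi k) j') Hpsi Hp').
Qed.

Lemma transfer (D : X -> Prop) (HD : Dclass d f C D) n (a : 'I_n -> X) eta :
  (forall j, D (a j)) ->
  (forall i (j k : 'I_n), (j < k)%N -> (eta <= d (iter i f (a j)) (iter i f (a k)))%R) ->
  exists b : 'I_n -> X, (forall j, E (b j)) /\
    forall i (j k : 'I_n), (j < k)%N -> (eta <= d (iter i f (b j)) (iter i f (b k)))%R.
Proof.
move=> HaD Hdist.
have [xE [HxE HEchar]] := HE. have [xD [HxD HDchar]] := HD.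
have Step1 : forall k, exists s, forall j, exists m L, period d f C (/ INR k.+1) m /\ (m %| L)%N /\
    chain d f C (/ INR k.+1) xE (iter s f (a j)) L.
  move=> k. have Hk := inv_pos k.
  have [m [Hm [Hper _]]] := per_exists HxE Hk.
  have [l Hl] := ICT HxE HxD Hk.
  exists (l * (m - 1))%N => j.
  have [_ Hsim] := (HDchar (a j)).1 (HaD j).
  have [_ [_ [m' [Hm' [L [HL HcL]]]]]] := Hsim _ Hk.
  have Em := period_uniq Hm' Hper. subst m'.
  exists m, (l + L + l * (m - 1))%N. split=> //. split.
  - have -> : (l + L + l * (m - 1) = L + l * m)%N by move: Hm; clear; nia.
    apply: dvdn_add => //. exact: dvdn_mull.
  - apply: chain_ext => //; first exact: C_inv. exact: Rlt_le. exact: chain_cat Hl HcL.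
have [s Hs] := fchoice Step1.
pose Z k j := iter (s k) f (a j).
have [phi [Hphi Hconv]] := joint Z (enum 'I_n).
have H2 : forall j : 'I_n, exists p, conv (fun k => Z (phi k) j) p.
  move=> j. apply: Hconv. by rewrite mem_enum.
have [b Hb] := fchoice H2.
have HCa : forall j, C (a j) by move=> j; have [] := (HDchar (a j)).1 (HaD j).
have HCb : forall j, C (b j).
  move=> j. apply: (C_closed HxE) => e He. have [N HN] := Hb j e He.
  exists (Z (phi N) j). split; last exact: HN. exact: C_iter.
exists b. split.
- move=> j. apply/HEchar. split; first exact: HCb. move=> del Hd.
  split=> //. split; first exact: HCb.
  have [m [_ [Hper _]]] := per_exists HxE Hd.
  exists m. split=> //.
  have Hd2 : (0 < del/2)%R by lra.
  have [N1 HN1] := small_inv Hd2. have [N2 HN2] := Hb j _ Hd2.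
  pose k := maxn N1 N2.
  have Hk1 : (N1 <= phi k)%N by apply: leq_trans (incr_ge Hphi k); rewrite /k; apply: leq_maxl.
  have Hk2 : (N2 <= k)%N by rewrite /k; apply: leq_maxr.
  have [m' [L [Hper' [HL HcL]]]] := Hs (phi k) j.
  have Hmm : (m %| m')%N.
    apply: (period_mono _ Hper Hper'). have := HN1 _ Hk1. lra.
  exists L. split; first exact: dvdn_trans Hmm HL.
  have := chain_last (HCb j) HcL. apply: chain_mono => //.
  have := HN1 _ Hk1. have := HN2 _ Hk2. rewrite /Z. lra.
- move=> i j k Hjk. apply: Rnot_lt_le => Hlt.
  pose e := (eta - d (iter i f (b j)) (iter i f (b k)))%R.
  have He2 : (0 < e/2)%R by rewrite /e; lra.
  have [h1 [Hh1 H1]] := iter_cont i (b j) He2.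
  have [h2 [Hh2 H2']] := iter_cont i (b k) He2.
  have [N1 HN1] := Hb j _ Hh1. have [N2 HN2] := Hb k _ Hh2.
  pose l := maxn N1 N2.
  have Hl1 : (N1 <= l)%N by apply: leq_maxl.
  have Hl2 : (N2 <= l)%N by apply: leq_maxr.
  have D1 : (d (b j) (Z (phi l) j) < h1)%R by rewrite d_sym; apply: HN1.
  have D2 : (d (b k) (Z (phi l) k) < h2)%R by rewrite d_sym; apply: HN2.
  have := H1 _ D1. have := H2' _ D2. have := Hdist (i + s (phi l))%N j k Hjk.
  rewrite !iterD -/(Z (phi l) j) -/(Z (phi l) k).
  have := d_tri (iter i f (Z (phi l) j)) (iter i f (b j)) (iter i f (Z (phi l) k)).
  have := d_tri (iter i f (b j)) (iter i f (b k)) (iter i f (Z (phi l) k)).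
  rewrite (d_sym (iter i f (Z (phi l) j)) (iter i f (b j))) (d_sym (iter i f (b k)) (iter i f (Z (phi l) k))).
  rewrite /e in He2 *. move=> ? ? ? ? ?. lra.
Qed.

Lemma fin_min (T : finType) (g : T -> R) : (forall t, (0 < g t)%R) -> exists e, (0 < e)%R /\ forall t, (e <= g t)%R.
Proof.
move=> Hg.
suff: forall l : seq T, exists e, (0 < e)%R /\ forall t, t \in l -> (e <= g t)%R.
  case/(_ (enum T)) => e [He H]. exists e. split=> // t. apply: H. by rewrite mem_enum.
elim=> [|t l [e [He IH]]].
- exists 1%R. split; first lra. move=> t. by rewrite in_nil.
- exists (Rmin (g t) e). split; first exact: Rmin_pos.
  move=> t'. rewrite in_cons => /orP [/eqP ->|Ht']; first exact: Rmin_l.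
  apply: Rle_trans (Rmin_r _ _) (IH _ Ht').
Qed.

Lemma open_ext n (A B : ('I_n -> X) -> Prop) : open_n d A -> (forall z, A z <-> B z) -> open_n d B.
Proof.
move=> HA HAB z /HAB Hz. have [e [He H]] := HA z Hz. exists e. split=> // w Hw. apply/HAB. exact: H.
Qed.

Lemma open_and n (A B : ('I_n -> X) -> Prop) : open_n d A -> open_n d B -> open_n d (fun z => A z /\ B z).
Proof.
move=> HA HB z [Hz1 Hz2]. have [e1 [He1 H1]] := HA z Hz1. have [e2 [He2 H2]] := HB z Hz2.
exists (Rmin e1 e2). split; first exact: Rmin_pos. move=> w Hw. split.
- apply: H1 => j. apply: Rlt_le_trans (Hw j) (Rmin_l _ _).
- apply: H2 => j. apply: Rlt_le_trans (Hw j) (Rmin_r _ _).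
Qed.

Lemma open_inter n (Q : nat -> ('I_n -> X) -> Prop) N : (forall k, open_n d (Q k)) ->
  open_n d (fun z => forall k, (k <= N)%N -> Q k z).
Proof.
move=> HQ. elim: N => [|N IH].
- apply: (open_ext (HQ 0)) => z. split.
  + move=> H k Hk. by have -> : k = 0 by move: Hk; clear; lia.
  + move=> H. exact: H.
- apply: (open_ext (open_and IH (HQ N.+1))) => z. split.
  + move=> [H1 H2] k Hk. case: (leqP k N) => Hk'; first exact: H1.
    by have -> : k = N.+1 by move: Hk Hk'; clear; lia.
  + move=> H. split; last exact: H. move=> k Hk. apply: H. by apply: leqW.
Qed.

Lemma open_S n r : open_n d (fun z : 'I_n -> X => forall j k : 'I_n, (j < k)%N -> (r < d (z j) (z k))%R).
Proof.
move=> z Hz.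
pose g (t : 'I_n * 'I_n) := if (t.1 < t.2)%N then ((d (z t.1) (z t.2) - r) / 2)%R else 1%R.
have Hg : forall t, (0 < g t)%R.
  move=> [j k]. rewrite /g /=. case: ifP => H; last lra. have := Hz j k H. lra.
have [e [He He2]] := fin_min Hg. exists e. split=> // w Hw j k Hjk.
have := He2 (j, k). rewrite /g /= Hjk. have := Hw j. have := Hw k.
have := d_tri (z j) (w j) (z k). have := d_tri (w j) (w k) (z k). rewrite (d_sym (w k) (z k)).
move=> ? ? ? ? ?. lra.
Qed.

Lemma open_T n r : open_n d (fun z : 'I_n -> X => forall j k : 'I_n, (j < k)%N -> (d (z j) (z k) < r)%R).
Proof.
move=> z Hz.
pose g (t : 'I_n * 'I_n) := if (t.1 < t.2)%N then ((r - d (z t.1) (z t.2)) / 2)%R else 1%R.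
have Hg : forall t, (0 < g t)%R.
  move=> [j k]. rewrite /g /=. case: ifP => H; last lra. have := Hz j k H. lra.
have [e [He He2]] := fin_min Hg. exists e. split=> // w Hw j k Hjk.
have := He2 (j, k). rewrite /g /= Hjk. have := Hw j. have := Hw k.
have := d_tri (w j) (z j) (w k). have := d_tri (z j) (z k) (w k). rewrite (d_sym (w j) (z j)).
move=> ? ? ? ? ?. lra.
Qed.

Lemma fam_tail (F : (nat -> Prop) -> Prop) : furstenberg F -> full_family F ->
  forall (A : nat -> Prop) N, (forall i, (N <= i)%N -> A i) -> F A.
Proof.
move=> [[A0 HA0] [_ Hup]] Hfull A N HA.
have H1 : F (fun _ => True) by eapply Hup; [exact HA0 | done].
have H2 := Hfull _ N H1. eapply Hup; first exact: H2. move=> i [_ Hi]. exact: HA.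
Qed.

Lemma KEY n (bt : 'I_n -> X) (z : 'I_n -> X) e : (forall j, E (bt j)) -> in_pow (Vs d f C E) z -> (0 < e)%R ->
  exists w, in_pow (Vs d f C E) w /\ (forall j, (d (z j) (w j) < e)%R) /\
    forall eps, (0 < eps)%R -> exists N, forall i, (N <= i)%N -> forall j, (d (iter i f (w j)) (iter i f (bt j)) < eps)%R.
Proof.
move=> Hbt Hz He.
have H1 : forall j, exists w, (d (z j) w < e)%R /\ asym w (bt j).
  move=> j. exact: CORE (Hz j) (Hbt j) He.
have [w Hw] := fchoice H1. exists w. split.
  move=> j. have [_ Has] := Hw j. exact: VsE (Hbt j) Has.
split; first by move=> j; case: (Hw j).
move=> eps Heps.
have H2 : forall j, exists N, forall i, (N <= i)%N -> (d (iter i f (w j)) (iter i f (bt j)) < eps)%R.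
  move=> j. have [_ Has] := Hw j. exact: Has.
have [Nf HNf] := fchoice H2. exists (\max_j Nf j) => i Hi j. apply: HNf.
apply: leq_trans Hi. exact: leq_bigmax.
Qed.

Lemma main_in (D : X -> Prop) (HD : Dclass d f C D)
  (F G : (nat -> Prop) -> Prop)
  (HF : furstenberg F) (HFfull : full_family F)
  (HG : furstenberg G) (HGfull : full_family G)
  (HFcomp : forall m : nat, (2 <= m)%N -> compatible d f F m)
  (HGcomp : forall m : nat, (2 <= m)%N -> compatible d f G m)
  (n : nat) (Hn : (2 <= n)%N) (delta : R)
  (a : 'I_n -> X) (HaD : forall j, D (a j))
  (Hdistal : distal_tuple d f delta a) (r : R) (Hr : (0 < r)%R) (Hrd : (r < delta)%R) :
  generic_chaotic d f F G n r (Vs d f C E).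
Proof.
have [eta [Heta Hdist]] := Hdistal.
have [b [HbE Hbd]] := transfer HD HaD Hdist.
have Hn0 : (0 < n)%N by move: Hn; clear; lia.
pose j0 := Ordinal Hn0.
have Hasym0 : forall w, asym w w.
  move=> w e He. exists 0 => i _. by rewrite d_refl.
split; first by exists (b j0); apply: VsE (HbE j0) (Hasym0 _).
pose US := fun z : 'I_n -> X => forall j k : 'I_n, (j < k)%N -> (r < d (z j) (z k))%R.
have [VS [HVSo HVS]] := HFcomp n Hn US (@open_S n r).
pose UT p := fun z : 'I_n -> X => forall j k : 'I_n, (j < k)%N -> (d (z j) (z k) < / INR p.+1)%R.
have HT1 : forall p, exists V : nat -> ('I_n -> X) -> Prop, (forall k, open_n d (V k)) /\
    forall z, G (fun i => UT p (fun j => iter i f (z j))) <-> (forall k, V k z).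
  move=> p. exact: HGcomp n Hn (UT p) (@open_T n _).
have [VT HVT] := fchoice HT1.
pose Y := Vs d f C E.
pose V idx := fun z : 'I_n -> X => in_pow Y z /\
  (if odd idx then forall p, (p <= idx)%N -> forall k, (k <= idx)%N -> VT p k z else forall k, (k <= idx)%N -> VS k z).
have HWopen : forall idx, open_n d (fun z => if odd idx then forall p, (p <= idx)%N -> forall k, (k <= idx)%N -> VT p k z
    else forall k, (k <= idx)%N -> VS k z).
  move=> idx. case: (odd idx).
  - apply: (open_inter (Q := fun p z => forall k, (k <= idx)%N -> VT p k z)) => p.
    apply: open_inter => k. by case: (HVT p).
  - exact: open_inter.
exists V. split.
- move=> idx. split.
  + split; first by move=> z [].
    move=> z [Hz1 Hz2]. have [e [He H]] := HWopen idx z Hz2. exists e. split=> // w Hw Hzw.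
    split=> //. exact: H.
  + move=> z Hz e He. rewrite /V. case: (odd idx).
    * have [w [Hw1 [Hw2 Hw3]]] := KEY (bt := fun _ => b j0) (fun _ => HbE j0) Hz He.
      exists w. split; last exact: Hw2. split=> // p _ k _.
      case: (HVT p) => _ H. apply: ((H w).1 _ k).
      have Hp2 : (0 < / INR p.+1 / 2)%R by have := inv_pos p; lra.
      have [N HN] := Hw3 _ Hp2. apply: (fam_tail HG HGfull (N := N)) => i Hi j k' _.
      have := HN i Hi j. have := HN i Hi k'.
      have := d_tri (iter i f (w j)) (iter i f (b j0)) (iter i f (w k')).
      rewrite (d_sym (iter i f (b j0)) (iter i f (w k'))). move=> /= ? ? ?. lra.
    * have [w [Hw1 [Hw2 Hw3]]] := KEY HbE Hz He.
      exists w. split; last exact: Hw2. split=> // k _.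
      apply: ((HVS w).1 _ k).
      have He2 : (0 < (eta - r) / 2)%R by lra.
      have [N HN] := Hw3 _ He2. apply: (fam_tail HF HFfull (N := N)) => i Hi j k' Hjk.
      have := HN i Hi j. have := HN i Hi k'. have := Hbd i j k' Hjk.
      have := d_tri (iter i f (b j)) (iter i f (w j)) (iter i f (b k')).
      have := d_tri (iter i f (w j)) (iter i f (w k')) (iter i f (b k')).
      rewrite (d_sym (iter i f (b j)) (iter i f (w j))). move=> /= ? ? ? ? ?. lra.
- move=> z Hz. have [Hz0 _] := Hz 0. split=> //. split.
  + have : forall k, VS k z.
      move=> k. have [_ H] := Hz (k.*2). rewrite odd_double in H. apply: H. by rewrite -addnn leq_addr.
    by move/HVS.
  + move=> e He. have [p Hp] := small_inv He.
    have : forall k, VT p k z.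
      move=> k. have [_ H] := Hz (p + k).*2.+1. rewrite /= odd_double /= in H. apply: H; move: k; clear; lia.
    case: (HVT p) => _ H /H HGp. eapply (proj2 (proj2 HG)); first exact: HGp.
    move=> i Hi j k Hjk. have := Hi j k Hjk. have := Hp p (leqnn p). lra.
Qed.

End Basic.

Unset Implicit Arguments.

Theorem corollary1p2
  (X : Type) (d : X -> X -> R) (f : X -> X)
  (Hmet : is_metric d) (Hcpt : mcompact d) (Hcont : mcontinuous d f)
  (Hshadow : s_limit_shadowing d f)
  (C : X -> Prop) (HC : chain_component d f C)
  (D : X -> Prop) (HD : Dclass d f C D)
  (F G : (nat -> Prop) -> Prop)
  (HF : furstenberg F) (HFfull : full_family F)
  (HG : furstenberg G) (HGfull : full_family G)
  (HFcomp : forall m : nat, (2 <= m)%N -> compatible d f F m)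
  (HGcomp : forall m : nat, (2 <= m)%N -> compatible d f G m)
  (HFtrans : translation_invariant F)
  (n : nat) (Hn : (2 <= n)%N) (delta : R) (Hdelta : (0 < delta)%R)
  (a : 'I_n -> X) (HaD : forall j, D (a j))
  (Hdistal : distal_tuple d f delta a) :
  forall E : X -> Prop, Dclass d f C E ->
  forall r : R, (0 < r)%R -> (r < delta)%R ->
    generic_chaotic d f F G n r (Vs d f C E).
Proof.
move=> E HE r Hr Hrd.
exact: (main_in Hmet Hcpt Hcont HC HE Hshadow HD HF HFfull HG HGfull HFcomp HGcomp Hn HaD Hdistal Hr Hrd).
Qed.
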